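(* Let $\mathsf{K}$ be a variety, $\mathbf{B}\in\mathsf{K}$, and $\mathbf{A}\leq\mathbf{B}$ fully epic in $\mathsf{K}$. For all congruences $\theta_1,\theta_2$ of $\mathbf{B}$, \[(\theta_1+^{\mathbf{B}}\theta_2){\upharpoonright}_A=\theta_1{\upharpoonright}_A+^{\mathbf{A}}\theta_2{\upharpoonright}_A.\]
   Context: For an algebra $\mathbf{C}$, $+^{\mathbf{C}}$ denotes the join in the congruence lattice of $\mathbf{C}$; $\theta{\upharpoonright}_A=\theta\cap(A\times A)$. $\mathbf{A}\leq\mathbf{B}$ is epic in $\mathsf{K}$ if for all $\mathbf{C}\in\mathsf{K}$ and homomorphisms $g,h\colon\mathbf{B}\to\mathbf{C}$, $g{\upharpoonright}_A=h{\upharpoonright}_A$ implies $g=h$; it is full in $\mathsf{K}$ if it is proper, almost total ($B=\mathrm{Sg}^{\mathbf{B}}(A\cup\{b\})$ for some $b$), and every congruence $\theta\neq\mathrm{id}_B$ of $\mathbf{B}$ relates each $b\in B$ to some $a\in A$; fully epic means full and epic. *)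

(* Defs.v *)
From mathcomp Require Import all_boot.
Set Implicit Arguments. Unset Strict Implicit. Unset Printing Implicit Defensive.

Section UA.
Variable Op : Type.
Variable ar : Op -> nat.

Record algebra := Algebra {
  carrier :> Type;
  op : forall o : Op, ('I_(ar o) -> carrier) -> carrier }.
Arguments op : clear implicits.

Inductive term : Type :=
| Var : nat -> term
| App : forall o : Op, ('I_(ar o) -> term) -> term.

Fixpoint eval (C : algebra) (v : nat -> C) (t : term) : C :=
  match t with
  | Var n => v n
  | App o args => op C o (fun i => @eval C v (args i))
  end.

(* The variety defined by a set E of identities: K = Mod(E). *)
Definition in_variety (E : term -> term -> Prop) (C : algebra) : Prop :=
  forall s t, E s t -> forall v : nat -> C, eval v s = eval v t.

Definition hom (B C : algebra) (g : B -> C) : Prop :=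
  forall o (a : 'I_(ar o) -> B), g (op B o a) = op C o (fun i => g (a i)).

Definition subuniverse (B : algebra) (S : B -> Prop) : Prop :=
  forall o (a : 'I_(ar o) -> B), (forall i, S (a i)) -> S (op B o a).

Definition subalg (B : algebra) (S : B -> Prop) (HS : subuniverse S) : algebra :=
  @Algebra {x : B | S x}
    (fun o a => exist S (op B o (fun i => proj1_sig (a i)))
                      (HS o _ (fun i => proj2_sig (a i)))).

Definition Sg (B : algebra) (X : B -> Prop) (x : B) : Prop :=
  forall S, subuniverse S -> (forall y, X y -> S y) -> S x.

Definition congruence (C : algebra) (th : C -> C -> Prop) : Prop :=
  [/\ (forall x, th x x),
      (forall x y, th x y -> th y x),
      (forall x y z, th x y -> th y z -> th x z) &
      (forall o (a b : 'I_(ar o) -> C), (forall i, th (a i) (b i)) ->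
          th (op C o a) (op C o b))].

Definition cjoin (C : algebra) (th1 th2 : C -> C -> Prop) (x y : C) : Prop :=
  forall phi, congruence phi ->
    (forall a b, th1 a b -> phi a b) -> (forall a b, th2 a b -> phi a b) ->
    phi x y.

Definition restr (B : algebra) (S : B -> Prop) (th : B -> B -> Prop)
  (x y : {x : B | S x}) : Prop := th (proj1_sig x) (proj1_sig y).

Definition epic (E : term -> term -> Prop) (B : algebra) (S : B -> Prop) : Prop :=
  forall (C : algebra), in_variety E C ->
  forall g h : B -> C, hom g -> hom h ->
    (forall a, S a -> g a = h a) -> forall b, g b = h b.

(* A <= B is full: proper, almost total, and every non-identity congruence
   relates each element of B to some element of A. *)
Definition full (B : algebra) (S : B -> Prop) : Prop :=
  [/\ (exists b : B, ~ S b),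
      (exists b : B, forall x, Sg (fun y => S y \/ y = b) x) &
      (forall th, congruence th -> ~ (forall x y, th x y <-> x = y) ->
         forall b : B, exists a, S a /\ th b a)].

Definition fully_epic E B S := full S /\ @epic E B S.

End UA.

(* Main.v *)
From Stdlib Require Import Classical ClassicalEpsilon FunctionalExtensionality PropExtensionality ProofIrrelevance.
Require Import Defs.
From mathcomp Require Import all_boot.

Lemma my_choice (I T : Type) (P : I -> T -> Prop) :
  (forall i, exists t, P i t) -> exists f : I -> T, forall i, P i (f i).
Proof.
move=> H; exists (fun i => proj1_sig (constructive_indefinite_description _ (H i))).
move=> i; exact: proj2_sig.
Qed.

Arguments my_choice {I T P}.
Section Aux.
Variable Op : Type.
Variable ar : Op -> nat.

Lemma cjoin_cong (C : algebra ar) (t1 t2 : C -> C -> Prop) :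
  congruence (cjoin t1 t2).
Proof.
split.
- move=> x phi [r _ _ _] _ _; exact: r.
- move=> x y H phi Hp h1 h2; case: (Hp) => _ s _ _; apply: s; exact: H.
- move=> x y z Hxy Hyz phi Hp h1 h2; case: (Hp) => _ _ t _.
  apply: t (Hxy phi Hp h1 h2) (Hyz phi Hp h1 h2).
- move=> o a b H phi Hp h1 h2; case: (Hp) => _ _ _ c; apply: c => i.
  exact: (H i phi Hp h1 h2).
Qed.

Lemma cjoin_l (C : algebra ar) (t1 t2 : C -> C -> Prop) x y :
  t1 x y -> cjoin t1 t2 x y.
Proof. by move=> H phi _ h1 _; apply: h1. Qed.
Lemma cjoin_r (C : algebra ar) (t1 t2 : C -> C -> Prop) x y :
  t2 x y -> cjoin t1 t2 x y.
Proof. by move=> H phi _ _ h2; apply: h2. Qed.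

Variable B : algebra ar.
Variable g : B -> B -> Prop.
Hypothesis Hg : congruence g.

Definition Q := {P : B -> Prop | exists b, P = g b}.
Definition cls (b : B) : Q := exist _ (g b) (ex_intro _ b erefl).
Definition rep (q : Q) : B :=
  proj1_sig (constructive_indefinite_description _ (proj2_sig q)).

Lemma Q_inj (q1 q2 : Q) : proj1_sig q1 = proj1_sig q2 -> q1 = q2.
Proof.
case: q1 q2 => [P1 p1] [P2 p2] /= E; move: p1 p2; rewrite E => p1 p2.
by rewrite (proof_irrelevance _ p1 p2).
Qed.

Lemma rep_spec q : proj1_sig q = g (rep q).
Proof. rewrite /rep; by case: constructive_indefinite_description. Qed.

Lemma cls_rep q : cls (rep q) = q.
Proof. apply: Q_inj => /=; by rewrite rep_spec. Qed.

Lemma cls_eq x y : cls x = cls y <-> g x y.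
Proof.
case: Hg => r s t _; split.
- move=> E; have : proj1_sig (cls x) = proj1_sig (cls y) by rewrite E.
  move=> /= E'; rewrite E'; exact: r.
- move=> H; apply: Q_inj => /=; apply: functional_extensionality => z.
  apply: propositional_extensionality; split => Hz.
  + exact: t (s _ _ H) Hz.
  + exact: t H Hz.
Qed.

Lemma g_rep_cls z : g z (rep (cls z)).
Proof. by apply/cls_eq; rewrite cls_rep. Qed.

Definition QA : algebra ar :=
  @Algebra Op ar Q (fun o q => cls (@op _ _ B o (fun i => rep (q i)))).

Lemma cls_hom : hom (C := QA) cls.
Proof.
move=> o a /=; apply/cls_eq; case: Hg => _ _ _ c; apply: c => i.
exact: g_rep_cls.
Qed.

Lemma eval_Q (v : nat -> QA) t :
  eval v t = cls (eval (fun n => rep (v n)) t).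
Proof.
elim: t => [n|o args IH] /=; first by rewrite cls_rep.
apply/cls_eq; case: Hg => _ sy _ c; apply: c => i.
rewrite IH; apply: sy; exact: g_rep_cls.
Qed.

Lemma QA_variety E : in_variety E B -> in_variety E QA.
Proof.
move=> HB s t Est v; rewrite !eval_Q; congr cls; exact: HB.
Qed.

End Aux.
Arguments cjoin_cong {Op ar C} t1 t2.
Arguments QA {Op ar B} g.
Arguments cls {Op ar B} g b.
Arguments rep {Op ar B g} q.
Arguments cls_eq {Op ar B g} Hg x y.
Arguments cls_hom {Op ar B g} Hg.
Arguments g_rep_cls {Op ar B g} Hg z.
Arguments QA_variety {Op ar B g} Hg E.

Theorem mainTheorem15 (Op : Type) (ar : Op -> nat)
  (E : term ar -> term ar -> Prop) (B : algebra ar) (HB : in_variety E B)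
  (A : B -> Prop) (HA : subuniverse A) (Hfe : fully_epic E A)
  (th1 th2 : B -> B -> Prop) (H1 : congruence th1) (H2 : congruence th2) :
  forall x y : {b : B | A b},
    @restr _ _ B A (cjoin th1 th2) x y <->
    @cjoin _ _ (subalg HA) (@restr _ _ B A th1) (@restr _ _ B A th2) x y.
Proof.
move=> x y; split; last first.
  move=> H; apply: (H (@restr _ _ B A (cjoin th1 th2))).
  rewrite /=.
  - have [r s t c] := cjoin_cong th1 th2.
    split.
    + move=> z; exact: r.
    + move=> ? ? ; exact: s.
    + move=> ? ? ?; exact: t.
    + move=> o a b Hab; exact: (c o (fun i => proj1_sig (a i)) (fun i => proj1_sig (b i)) Hab).
  - move=> a b Hab; exact: (@cjoin_l _ _ B th1 th2 _ _ Hab).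
  - move=> a b Hab; exact: (@cjoin_r _ _ B th1 th2 _ _ Hab).
rewrite /restr => Hphi.
case: Hfe => [[_ _ Hnt] Hep].
set psi := @cjoin _ _ (subalg HA) (@restr _ _ B A th1) (@restr _ _ B A th2).
have Hpsi : congruence psi by exact: cjoin_cong.
have psi1 : forall a b, restr th1 a b -> psi a b by move=> a b; exact: cjoin_l.
have psi2 : forall a b, restr th2 a b -> psi a b by move=> a b; exact: cjoin_r.
case: (H1) => r1 s1 t1 c1; case: (H2) => r2 s2 t2 c2.
case: (Hpsi) => rp sp tp cp.
case: (classic (forall u v, th1 u v <-> u = v)) => [id1|nid1].
  apply: (psi2); apply: (Hphi) => // a b /id1 ->; exact: r2.
case: (classic (forall u v, th2 u v <-> u = v)) => [id2|nid2].
  apply: (psi1); apply: (Hphi) => // a b /id2 ->; exact: r1.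
have N1 := Hnt th1 H1 nid1.
have N2 := Hnt th2 H2 nid2.
pose gam (b b' : B) := exists a a' : {z : B | A z},
  th1 b (proj1_sig a) /\ th1 b' (proj1_sig a') /\ psi a a'.
have gamA : forall a a', psi a a' -> gam (proj1_sig a) (proj1_sig a').
  move=> a a' H; exists a, a'; split; [exact: r1|split; [exact: r1|exact: H]].
have Agam : forall a a', gam (proj1_sig a) (proj1_sig a') -> psi a a'.
  move=> a a' [a1 [a2 [h1 [h2 h3]]]].
  apply: (tp _ _ _ (psi1 a a1 h1)); apply: (tp _ _ _ h3); apply: sp; exact: (psi1 a' a2 h2).
have Hgam : congruence gam.
  split.
  - move=> b; have [a [Ha h]] := N1 b; exists (exist _ a Ha), (exist _ a Ha).
    split => //; split => //; exact: rp.
  - move=> b b' [a [a' [h1 [h2 h3]]]]; exists a', a; split => //; split => //.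
    exact: sp.
  - move=> b b' b'' [a1 [a2 [h1 [h2 h3]]]] [a3 [a4 [h4 [h5 h6]]]].
    exists a1, a4; split => //; split => //.
    apply: (tp _ _ _ h3); apply: (tp _ _ _ _ h6); apply: (psi1 a2 a3); rewrite /restr.
    exact: t1 (s1 _ _ h2) h4.
  - move=> o a b Hab.
    have [f Hf] := my_choice Hab.
    have [f' Hf'] := my_choice Hf.
    exists (@op _ _ (subalg HA) o f), (@op _ _ (subalg HA) o f').
    split; [|split] => /=.
    + apply: (c1) => i; by case: (Hf' i) => h _.
    + apply: (c1) => i; by case: (Hf' i) => _ [h _].
    + apply: (cp) => i; by case: (Hf' i) => _ [_ h].
have gam1 : forall b b', th1 b b' -> gam b b'.
  move=> b b' H; have [a [Ha h]] := N1 b'.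
  exists (exist _ a Ha), (exist _ a Ha); split => /=; last by split.
  exact: t1 H h.
have [r Hr] : exists r : B -> {z : B | A z}, forall b, th2 b (proj1_sig (r b)).
  apply: (@my_choice _ _ (fun b (a : {z : B | A z}) => th2 b (proj1_sig a))) => b; have [a [Ha h]] := N2 b; by exists (exist _ a Ha).
have key : forall b, gam b (proj1_sig (r b)).
  move=> b; apply/(cls_eq Hgam).
  have Hh : hom (C := QA gam) (fun b => cls gam (proj1_sig (r b))).
    move=> o b0 /=; apply/(cls_eq Hgam).
    case: (Hgam) => _ _ tg cg.
    apply: (tg _ (@op _ _ B o (fun i => proj1_sig (r (b0 i))))).
      apply: (gamA (r (@op _ _ B o b0)) (@op _ _ (subalg HA) o (fun i => r (b0 i)))).
      apply: psi2; rewrite /restr /=.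
      apply: (t2 _ _ _ (s2 _ _ (Hr _))); apply: (c2) => i; exact: Hr.
    apply: (cg) => i; exact: g_rep_cls.
  move: b; apply: (Hep (QA gam) (QA_variety Hgam E HB) _ _ (cls_hom Hgam) Hh).
  move=> a Ha /=; apply/(cls_eq Hgam).
  apply: (gamA (exist _ a Ha) (r a)); apply: (psi2 (exist _ a Ha) (r a)); exact: Hr.
have gam2 : forall b b', th2 b b' -> gam b b'.
  move=> b b' H; case: (Hgam) => _ sg tg _.
  apply: (tg _ _ _ (key b)); apply: (tg _ _ _ _ (sg _ _ (key b'))).
  apply: (gamA (r b) (r b')); apply: (psi2 (r b) (r b')); rewrite /restr.
  apply: (t2 _ _ _ (s2 _ _ (Hr b))); apply: (t2 _ _ _ H); exact: Hr.
apply: (Agam x y); apply: Hphi => //; exact: gam1.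
Qed.
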